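(* Let $\dot x = Ax+\sum_{i=1}^mB_iu_i$, $y_i=C_ix$ be an $n$-dimensional $m$-channel continuous-time linear system with neighbor graph $\mathbb{N}$, let $n_i>0$ for all $i\in\{1,\dots,m\}$, and let $\{\bar A,\bar B_i,\bar C_i;m\}$ be the extended system with $\bar A=\begin{bmatrix}A&0\\0&0\end{bmatrix}$, $\bar B_i=\begin{bmatrix}B_i&0\\0&E_i\end{bmatrix}$, $\bar C_i=\begin{bmatrix}C_i&0\\0&E_{\mathcal{N}_i}'\end{bmatrix}$, where $E_i$ is the $(\sum_kn_k)\times n_i$ block column matrix with $I_{n_i}$ as its $i$th block and zeros elsewhere and $E_{\mathbf{s}}=[E_{i_1}\ \cdots\ E_{i_s}]$ for $\mathbf{s}=\{i_1<\dots<i_s\}$. Then the transfer graph of the extended system is strongly connected if and only if the union of the transfer graph and the neighbor graph of the original system is strongly connected.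
   Context: The neighbor graph is a directed graph on $\{1,\dots,m\}$ with an arc $j\to i$ iff $j$ is a neighbor of $i$; $\mathcal{N}_i$ is the set of neighbors of $i$ including $i$. The transfer graph of an $m$-channel system $\{A,B_i,C_i;m\}$ is the directed graph on $\{1,\dots,m\}$ with an arc from $j$ to $i$ whenever the transfer matrix $C_i(sI-A)^{-1}B_j\neq0$. The union of two directed graphs on the same $m$ vertices is the directed graph on those vertices whose arc set is the union of their arc sets. Strongly connected: directed paths exist between every ordered pair of vertices. *)

(* Defs.v *)
From HB Require Import structures.
From mathcomp Require Import all_boot all_order all_algebra.
From mathcomp Require Import fraction.
Set Implicit Arguments. Unset Strict Implicit. Unset Printing Implicit Defensive.
Import Order.TTheory GRing.Theory Num.Theory.
Local Open Scope ring_scope.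

Definition ratf (R : fieldType) := {fraction {poly R}}.

Definition rcst (R : fieldType) (a : R) : ratf R :=
  FracField.tofrac (a%:P : {poly R}).

Definition svar (R : fieldType) : ratf R := FracField.tofrac ('X : {poly R}).

Definition transfer_mx (R : fieldType) (n p q : nat)
  (A : 'M[R]_n) (B : 'M[R]_(n, p)) (C : 'M[R]_(q, n)) : 'M[ratf R]_(q, p) :=
  map_mx (@rcst R) C *m invmx ((svar R)%:M - map_mx (@rcst R) A)
    *m map_mx (@rcst R) B.

(* Transfer graph of the m-channel system {A, B_i, C_i; m}:
   arc j -> i (i.e. [transfer_graph A B C j i]) iff C_i (sI-A)^{-1} B_j <> 0. *)
Definition transfer_graph (R : fieldType) (n m : nat) (p q : 'I_m -> nat)
  (A : 'M[R]_n) (B : forall i : 'I_m, 'M[R]_(n, p i))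
  (C : forall i : 'I_m, 'M[R]_(q i, n)) : rel 'I_m :=
  fun j i => transfer_mx A (B j) (C i) != 0.

Definition neighbor_graph (m : nat) (Nb : 'I_m -> {set 'I_m}) : rel 'I_m :=
  fun j i => (j != i) && (j \in Nb i).

Definition graph_union (T : finType) (e1 e2 : rel T) : rel T :=
  fun j i => e1 j i || e2 j i.

Definition strongly_connected (T : finType) (e : rel T) : Prop :=
  forall x y : T, connect e x y.

Definition Eblk (R : fieldType) (m : nat) (nn : 'I_m -> nat) (i : 'I_m)
  : 'M[R]_(\sum_(k < m) nn k, nn i) :=
  \mxcol_(k < m) (if k == i then pid_mx (nn i) else 0 : 'M[R]_(nn k, nn i)).

(* E_s = [E_{i_1} ... E_{i_s}] for s = {i_1 < ... < i_s}
   (enum of a set of ordinals lists its elements in increasing order). *)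
Definition Eset (R : fieldType) (m : nat) (nn : 'I_m -> nat) (s : {set 'I_m})
  : 'M[R]_(\sum_(k < m) nn k, \sum_(j < #|s|) nn (enum_val j)) :=
  \mxrow_(j < #|s|) Eblk R nn (enum_val j).

Definition ext_A (R : fieldType) (n m : nat) (nn : 'I_m -> nat) (A : 'M[R]_n)
  : 'M[R]_(n + \sum_(k < m) nn k) := block_mx A 0 0 0.

Definition ext_B (R : fieldType) (n m : nat) (nn p : 'I_m -> nat)
  (B : forall i : 'I_m, 'M[R]_(n, p i)) (i : 'I_m)
  : 'M[R]_(n + \sum_(k < m) nn k, p i + nn i) :=
  block_mx (B i) 0 0 (Eblk R nn i).

Definition ext_C (R : fieldType) (n m : nat) (nn q : 'I_m -> nat)
  (Nb : 'I_m -> {set 'I_m}) (C : forall i : 'I_m, 'M[R]_(q i, n)) (i : 'I_m)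
  : 'M[R]_(q i + \sum_(j < #|Nb i|) nn (enum_val j), n + \sum_(k < m) nn k) :=
  block_mx (C i) 0 0 (Eset R nn (Nb i))^T.

(* Main.v *)
Require Import Defs.
From HB Require Import structures.
From mathcomp Require Import all_boot all_order all_algebra.
From mathcomp Require Import fraction.
Set Implicit Arguments. Unset Strict Implicit. Unset Printing Implicit Defensive.
Import Order.TTheory GRing.Theory Num.Theory.
Local Open Scope ring_scope.

Section S.
Variable R : fieldType.
HB.instance Definition _ := GRing.RMorphism.copy (@rcst R) (@FracField.tofrac _ \o polyC).

Lemma mxcol_eq0 (m k : nat) (p_ : 'I_m -> nat) (B_ : forall i, 'M[R]_(p_ i, k)) :
  (\mxcol_i B_ i == 0) = [forall i, B_ i == 0].
Proof.
apply/eqP/forallP => [H i|H].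
  by rewrite -(mxcolK B_ i) H submxcol0.
by rewrite -mxcol0; apply: eq_mxcol => i; apply/eqP.
Qed.

Lemma Eblk_mul (m : nat) (nn : 'I_m -> nat) (Hnn : forall i, (0 < nn i)%N) (a b : 'I_m) :
  ((Eblk R nn a)^T *m Eblk R nn b == 0) = (a != b).
Proof.
rewrite /Eblk tr_mxcol mul_mxrow_mxcol (bigD1 a) //= big1 ?addr0; last first.
  by move=> k /negbTE ->; rewrite trmx0 mul0mx.
rewrite eqxx; case: (eqVneq a b) => [e|ne]; last first.
  by rewrite mulmx0 eqxx.
subst b; rewrite tr_pid_mx pid_mx_1 mul1mx /=.
apply/negP => /eqP H; have := mxrank1 R (nn a); rewrite H mxrank0.
by move=> e; have := Hnn a; rewrite -e.
Qed.
Lemma mxcol_mul (m k l : nat) (p_ : 'I_m -> nat) (B_ : forall i, 'M[R]_(p_ i, k))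
  (A : 'M[R]_(k, l)) : \mxcol_i B_ i *m A = \mxcol_i (B_ i *m A).
Proof.
rewrite -[LHS]submxcolK; apply: eq_mxcol => i.
by rewrite -submxcol_mul mxcolK.
Qed.

Lemma Eset_mul (m : nat) (nn : 'I_m -> nat) (Hnn : forall i, (0 < nn i)%N)
   (s : {set 'I_m}) (j : 'I_m) :
  ((Eset R nn s)^T *m Eblk R nn j == 0) = (j \notin s).
Proof.
rewrite /Eset tr_mxrow mxcol_mul mxcol_eq0.
apply/forallP/idP => [H|H l].
  apply/negP => js; have := H (enum_rank_in js j).
  by rewrite Eblk_mul // enum_rankK_in // eqxx.
rewrite Eblk_mul //; apply/eqP => e; move: H; rewrite -e.
by rewrite enum_valP.
Qed.
Lemma unit_sIA (n : nat) (A : 'M[R]_n) :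
  (svar R)%:M - map_mx (@rcst R) A \in unitmx.
Proof.
have -> : (svar R)%:M - map_mx (@rcst R) A
   = map_mx (@FracField.tofrac _) (char_poly_mx A).
  by rewrite /char_poly_mx map_mxB map_scalar_mx -map_mx_comp.
rewrite unitmxE det_map_mx unitfE tofrac_eq0.
exact: monic_neq0 (char_poly_monic A).
Qed.

Lemma invmx_bdiag (K : fieldType) (n1 n2 : nat) (P : 'M[K]_n1) (Q : 'M[K]_n2) :
  P \in unitmx -> Q \in unitmx ->
  invmx (block_mx P 0 0 Q) = block_mx (invmx P) 0 0 (invmx Q).
Proof.
move=> uP uQ.
have DX : block_mx P 0 0 Q *m block_mx (invmx P) 0 0 (invmx Q) = 1%:M.
  rewrite mulmx_block !mulmx0 !mul0mx !addr0 !add0r !mulmxV //.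
  by rewrite -scalar_mx_block.
have uD : block_mx P 0 0 Q \in unitmx.
  by rewrite unitmxE det_ublock unitrM -!unitmxE uP uQ.
by rewrite -[LHS]mulmx1 -DX mulKmx.
Qed.
Lemma svar_neq0 : svar R != 0.
Proof. by rewrite /svar tofrac_eq0 polyX_eq0. Qed.

Lemma transfer_ext (n N p q k1 k2 : nat) (A : 'M[R]_n) (B : 'M[R]_(n, p))
  (C : 'M[R]_(q, n)) (E1 : 'M[R]_(N, k1)) (E2 : 'M[R]_(k2, N)) :
  transfer_mx (block_mx A 0 0 0) (block_mx B 0 0 E1) (block_mx C 0 0 E2)
  = block_mx (transfer_mx A B C) 0 0
      ((svar R)^-1 *: map_mx (@rcst R) (E2 *m E1)).
Proof.
rewrite /transfer_mx !map_block_mx !map_mx0 (scalar_mx_block n N).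
rewrite opp_block_mx add_block_mx.
rewrite !oppr0 !addr0 invmx_bdiag ?unit_sIA //; last first.
  by rewrite unitmxE det_scalar unitfE expf_neq0 // svar_neq0.
rewrite invmx_scalar !mulmx_block !mulmx0 !mul0mx !addr0 !add0r.
by rewrite !mul0mx mul_mx_scalar -scalemxAl map_mxM.
Qed.
Lemma ext_arc (n m : nat) (p q nn : 'I_m -> nat)
  (A : 'M[R]_n) (B : forall i : 'I_m, 'M[R]_(n, p i))
  (C : forall i : 'I_m, 'M[R]_(q i, n)) (Nb : 'I_m -> {set 'I_m})
  (Hnn : forall i : 'I_m, (0 < nn i)%N) (j i : 'I_m) :
  transfer_graph (ext_A nn A) (ext_B nn B) (ext_C nn Nb C) j i
  = transfer_graph A B C j i || (j \in Nb i).
Proof.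
rewrite /transfer_graph /ext_A /ext_B /ext_C transfer_ext block_mx_eq0 !eqxx /=.
rewrite scalemx_eq0 invr_eq0 (negbTE svar_neq0) /= map_mx_eq0 Eset_mul //.
by rewrite negb_and negbK.
Qed.
End S.
Unset Implicit Arguments.
Set Strict Implicit.

Theorem proposition3 (R : realFieldType) (n m : nat) (p q nn : 'I_m -> nat)
  (A : 'M[R]_n) (B : forall i : 'I_m, 'M[R]_(n, p i))
  (C : forall i : 'I_m, 'M[R]_(q i, n)) (Nb : 'I_m -> {set 'I_m})
  (HNb : forall i : 'I_m, i \in Nb i)
  (Hnn : forall i : 'I_m, (0 < nn i)%N) :
  strongly_connected
    (transfer_graph (ext_A nn A) (ext_B nn B) (ext_C nn Nb C))
  <-> strongly_connected
        (graph_union (transfer_graph A B C) (neighbor_graph Nb)).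
Proof.
split => H x y; move: (H x y); apply: connect_sub => j i.
  rewrite ext_arc // => /orP[T|N].
    by apply: connect1; rewrite /graph_union T.
  case: (eqVneq j i) => [->|ne]; first exact: connect0.
  by apply: connect1; rewrite /graph_union /neighbor_graph ne N orbT.
rewrite /graph_union /neighbor_graph => /orP[T|/andP[_ N]];
  by apply: connect1; rewrite ext_arc // ?T ?N ?orbT.
Qed.
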